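(* For integers $n\ge1$ and $m\ge n$, let $N=2^{nm}n$ and let $P$ be the set of the first $N$ primes. For each $1\le i\le n$, $1\le j\le m$, choose a random subset $P'_{ij}\subseteq P$ by including each $p\in P$ independently with probability $1/2$ (independently over all $p,i,j$), and set $A_{ij}=\prod_{p\in P'_{ij}}p$. Then: (i) the random $n\times m$ integer matrix $A=(A_{ij})$ is $\tfrac12$-balanced; (ii) for all sufficiently large $n$ (and all $m\ge n$), $|A_{ij}|\le e^{3^{nm}}$ for all $i,j$ almost surely; (iii) $\mathbb{P}(A:\mathbb{Z}^m\to\mathbb{Z}^n\text{ is surjective})\le e^{-n}$, which tends to $0$ as $n\to\infty$.
   Context: A random variable $y$ taking values in $\mathbb{Z}$ is called $\epsilon$-balanced if for every prime $p$ and every residue $r\in\mathbb{Z}/p\mathbb{Z}$ we have $\mathbb{P}(y\equiv r \pmod p)\le 1-\epsilon$. A random matrix is $\epsilon$-balanced if its entries are independent and each entry is $\epsilon$-balanced. *)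

(* Defs.v *)
From Stdlib Require Import Reals ZArith ClassicalEpsilon.
From mathcomp Require Import all_boot.
Set Implicit Arguments. Unset Strict Implicit. Unset Printing Implicit Defensive.

(* next_prime p := the least prime q > p; it lies in (p, p`! + 1]
   (any prime divisor of p`! + 1 exceeds p). *)
Definition next_prime (p : nat) : nat :=
  head 0 [seq q <- iota p.+1 (p`!) | prime q].

Fixpoint nth_prime (k : nat) : nat :=
  match k with 0 => 2 | k'.+1 => next_prime (nth_prime k') end.

Definition pdec (P : Prop) : bool :=
  if excluded_middle_informative P then true else false.

Definition Pr (T : finType) (E : T -> Prop) : R :=
  Rdiv (INR #|[set w : T | pdec (E w)]|) (INR #|T|).

Definition balanced (T : finType) (y : T -> nat) (eps : R) : Prop :=
  forall p r : nat, prime p -> Rle (Pr (fun w => y w = r %[mod p])) (Rminus 1 eps).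

Definition entries_independent (T : finType) (n m : nat)
    (A : T -> 'I_n -> 'I_m -> nat) : Prop :=
  forall f : 'I_n -> 'I_m -> nat,
    Pr (fun w => forall i j, A w i j = f i j) =
    \big[Rmult/R1]_(ij : 'I_n * 'I_m) Pr (fun w => A w ij.1 ij.2 = f ij.1 ij.2).

Definition mx_balanced (T : finType) (n m : nat)
    (A : T -> 'I_n -> 'I_m -> nat) (eps : R) : Prop :=
  entries_independent A /\ forall i j, balanced (fun w => A w i j) eps.

Definition bigN (n m : nat) : nat := 2 ^ (n * m) * n.

(* sample space: for each (i,j), a subset P'_ij of the first N primes,
   indexed by 'I_N; uniform measure = each prime included independently
   with probability 1/2, independently over all p, i, j. *)
Notation Omega n m := {ffun 'I_n * 'I_m -> {set 'I_(bigN n m)}}.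

Definition Aent (n m : nat) (w : Omega n m) (i : 'I_n) (j : 'I_m) : nat :=
  \prod_(k in w (i, j)) nth_prime k.

Definition int_surjective (n m : nat) (A : 'I_n -> 'I_m -> nat) : Prop :=
  forall y : 'I_n -> Z, exists x : 'I_m -> Z,
    forall i, \big[Z.add/0%Z]_(j < m) (Z.of_nat (A i j) * x j)%Z = y i.

(* Main.v *)
From HB Require Import structures.
Require Import Defs.
From Stdlib Require Import Reals ZArith Lia Lra ClassicalEpsilon.
From mathcomp Require Import all_boot zify.
Set Implicit Arguments. Unset Strict Implicit. Unset Printing Implicit Defensive.

Lemma RmultA : associative Rmult. Proof. by move=> x y z; rewrite Rmult_assoc. Qed.
HB.instance Definition _ := Monoid.isComLaw.Build R R1 Rmult RmultA Rmult_comm Rmult_1_l.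

Lemma pdecP (P : Prop) : reflect P (pdec P).
Proof. rewrite /pdec; case: excluded_middle_informative => h; by constructor. Qed.

Lemma Pr_card (T : finType) (E : T -> Prop) (b : pred T) :
  (forall w, E w <-> b w) -> Pr E = Rdiv (INR #|[set w | b w]|) (INR #|T|).
Proof.
move=> h; rewrite /Pr; congr (Rdiv (INR _) _); apply: eq_card => w.
rewrite !inE; apply/idP/idP => [/pdecP /h //|/h /pdecP //].
Qed.

Lemma foldr_prod (T : eqType) (s : seq T) (G : T -> nat) :
  foldr muln 1 [seq G x | x <- s] = \prod_(x <- s) G x.
Proof. elim: s => [|x s IH]; first by rewrite big_nil. by rewrite /= big_cons IH. Qed.

Lemma foldr_prodT (aT : finType) (G : aT -> nat) :
  foldr muln 1 [seq G x | x : aT] = \prod_(x : aT) G x.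
Proof. rewrite /image_mem foldr_prod -big_enum /=. exact: eq_big_seq. Qed.

Lemma INR_prod (aT : finType) (G : aT -> nat) :
  INR (\prod_(x : aT) G x) = \big[Rmult/R1]_(x : aT) INR (G x).
Proof. by apply: (big_morph INR) => // x y; rewrite mult_INR. Qed.

Lemma prod_div (aT : finType) (a b : aT -> R) : (forall x, b x <> R0) ->
  Rdiv (\big[Rmult/R1]_(x : aT) a x) (\big[Rmult/R1]_(x : aT) b x) =
  \big[Rmult/R1]_(x : aT) Rdiv (a x) (b x).
Proof.
move=> hb.
suff : (\big[Rmult/R1]_(x : aT) b x <> R0) /\ Rdiv (\big[Rmult/R1]_(x : aT) a x) (\big[Rmult/R1]_(x : aT) b x) =
  \big[Rmult/R1]_(x : aT) Rdiv (a x) (b x) by case.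
apply: (big_ind3 (fun u v w => v <> R0 /\ Rdiv u v = w)).
- split; [exact: R1_neq_R0 | by rewrite /Rdiv Rinv_1 Rmult_1_r].
- move=> x1 x2 x3 y1 y2 y3 [h1 <-] [h2 <-]; split; first exact: Rmult_integral_contrapositive_currified.
  by rewrite /Rdiv Rinv_mult; ring.
- by move=> i _; split.
Qed.

Lemma pr_family (aT rT : finType) (F : aT -> pred rT) (E : {ffun aT -> rT} -> Prop) :
  0 < #|rT| -> (forall w, E w <-> forall x, w x \in F x) ->
  Pr E = \big[Rmult/R1]_(x : aT) Rdiv (INR #|F x|) (INR #|rT|).
Proof.
move=> r0 h.
rewrite (@Pr_card _ _ (fun w => w \in family F)); last first.
  by move=> w; rewrite h; split => [/familyP|/familyP].
have -> : #|[set w | w \in family F]| = #|family F| by apply: eq_card => w; rewrite inE.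
rewrite card_family card_dep_ffun !foldr_prodT !INR_prod prod_div //.
move=> x; apply: not_0_INR; lia.
Qed.

Lemma pr_marg (aT rT : finType) (x0 : aT) (B : pred rT) (E : {ffun aT -> rT} -> Prop) :
  0 < #|rT| -> (forall w, E w <-> w x0 \in B) ->
  Pr E = Rdiv (INR #|B|) (INR #|rT|).
Proof.
move=> r0 h.
rewrite (@pr_family _ _ (fun x => if x == x0 then B else predT)) //; last first.
  move=> w; rewrite h; split => [hb x|H]; last by have := H x0; rewrite eqxx.
  by case: eqP => [->|] //.
rewrite (bigD1 x0) //= eqxx big1 ?Rmult_1_r // => x /negbTE ->.
rewrite (_ : #|predT| = #|rT|); last by apply: eq_card.
apply: Rinv_r; apply: not_0_INR; lia.
Qed.

Lemma card_setT_pow (T : finType) : #|{set T}| = 2 ^ #|T|.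
Proof.
rewrite -cardsT -card_powerset; apply: eq_card => A.
by rewrite powersetE subsetT.
Qed.
Lemma next_prime_spec p : 0 < p ->
  [/\ prime (next_prime p), p < next_prime p &
      forall q, prime q -> p < q -> next_prime p <= q].
Proof.
move=> p0.
set d := pdiv (p`! + 1).
have hd1 : 1 < p`! + 1 by have := fact_gt0 p; lia.
have dpr : prime d := pdiv_prime hd1.
have dgt : p < d.
  rewrite ltnNge; apply/negP => hle.
  have d0 : 0 < d := prime_gt0 dpr.
  have h1 : d %| p`! by apply: dvdn_fact; rewrite d0 hle.
  have h2 : d %| p`! + 1 := pdiv_dvd _.
  have : d %| 1 by rewrite -(dvdn_addr 1 h1).
  by rewrite dvdn1 => /eqP e; rewrite e in dpr.
have dle : d <= p`! + 1 := pdiv_leq (ltnW hd1).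
have din : d \in [seq q <- iota p.+1 (p`!) | prime q].
  by rewrite mem_filter dpr mem_iota /=; lia.
rewrite /next_prime.
have srt : sorted ltn [seq q <- iota p.+1 (p`!) | prime q].
  by apply: sorted_filter; [exact: ltn_trans | exact: iota_ltn_sorted].
case E: [seq q <- iota p.+1 (p`!) | prime q] din srt => [//|q0 t] _ srt /=.
have q0in : q0 \in [seq q <- iota p.+1 (p`!) | prime q] by rewrite E inE eqxx.
move: q0in; rewrite mem_filter mem_iota => /andP [q0pr /andP [q0a q0b]].
split => // q qpr pq.
rewrite leqNgt; apply/negP => qlt.
have qin : q \in [seq q <- iota p.+1 (p`!) | prime q].
  rewrite mem_filter mem_iota qpr /=; lia.
move: qin; rewrite E inE => /orP [/eqP e|qt]; first by lia.
have := order_path_min ltn_trans srt => /allP /(_ q qt); lia.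
Qed.

Lemma nth_prime_pr k : prime (nth_prime k).
Proof.
elim: k => [//|k IH] /=.
by case: (next_prime_spec (prime_gt0 IH)).
Qed.

Lemma nth_prime_ltS k : nth_prime k < nth_prime k.+1.
Proof. by case: (next_prime_spec (prime_gt0 (nth_prime_pr k))). Qed.

Lemma nth_prime_lt j k : j < k -> nth_prime j < nth_prime k.
Proof.
elim: k => [//|k IH] jk.
have h2 := nth_prime_ltS k.
rewrite ltnS leq_eqVlt in jk; case/orP: jk => [/eqP -> //|/IH h].
exact: ltn_trans h h2.
Qed.

Lemma nth_prime_inj : injective nth_prime.
Proof.
move=> j k e; case: (ltngtP j k) => // h.
  by have := nth_prime_lt h; rewrite e ltnn.
by have := nth_prime_lt h; rewrite e ltnn.
Qed.

Lemma nth_prime_all k q : prime q -> q < nth_prime k -> exists2 j, j < k & q = nth_prime j.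
Proof.
elim: k q => [|k IH] q qpr qlt /=.
  by move: qlt; rewrite /= ltnNge prime_gt1.
have [hq|hq|hq] := ltngtP q (nth_prime k).
- by case: (IH q qpr hq) => j jk ->; exists j => //; apply: ltnW.
- case: (next_prime_spec (prime_gt0 (nth_prime_pr k))) => _ _ /(_ q qpr hq).
  by move: qlt => /= qlt h; lia.
- by exists k.
Qed.
Lemma cbin_ge M : 2 ^ M <= 'C(2 * M, M).
Proof.
elim: M => [//|k IH].
have -> : 2 * k.+1 = (2 * k).+2 by lia.
rewrite binS.
have h1 : 'C(2 * k, k) <= 'C((2 * k).+1, k.+1) by rewrite binS leq_addl.
have h2 : 'C(2 * k, k) <= 'C((2 * k).+1, k).
  case: k {IH h1} => [//|k']; rewrite binS; exact: leq_addr.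
rewrite expnS; lia.
Qed.

Lemma sum_ext p n K : prime p -> n <= K ->
  \sum_(1 <= k < K.+1) n %/ p ^ k = \sum_(1 <= k < n.+1) n %/ p ^ k.
Proof.
move=> pp nK.
rewrite (@big_cat_nat _ _ _ n.+1) //=.
rewrite [X in _ + X]big_nat_cond [X in _ + X]big1 ?addn0 // => k /andP [/andP [hk _] _].
apply: divn_small.
have := ltn_expl k (prime_gt1 pp); lia.
Qed.

Lemma sum_le_ind K L : \sum_(1 <= k < K) (k <= L) <= minn K.-1 L.
Proof.
elim: K => [|K IH]; first by rewrite big_geq.
case: K IH => [|K] IH; first by rewrite big_geq.
rewrite big_nat_recr //=.
case: (leqP K.+1 L) => h /=; lia.
Qed.

Lemma legendre_bound p M : prime p -> 0 < M ->
  p ^ logn p 'C(2 * M, M) <= 2 * M.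
Proof.
move=> pp M0.
have p1 := prime_gt1 pp.
set L := trunc_log p (2 * M).
apply: leq_trans (trunc_logP p1 _); last by lia.
rewrite leq_pexp2l ?prime_gt0 //.
have bf := @bin_fact (2 * M) M (leq_pmull _ (isT : 0 < 2)).
rewrite (_ : 2 * M - M = M) in bf; last by lia.
have C0 : 0 < 'C(2 * M, M) by rewrite bin_gt0; lia.
have eq1 : logn p (2 * M)`! = logn p 'C(2 * M, M) + (logn p M`! + logn p M`!).
  by rewrite -bf lognM ?muln_gt0 ?fact_gt0 // lognM ?fact_gt0.
rewrite !logn_fact // in eq1.
rewrite -(@sum_ext p M (2 * M)) // in eq1; last by lia.
have key : \sum_(1 <= k < (2 * M).+1) (2 * M) %/ p ^ k <=
    \sum_(1 <= k < (2 * M).+1) (2 * (M %/ p ^ k) + (k <= L)).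
  apply: leq_sum => k _.
  have q0 : 0 < p ^ k by rewrite expn_gt0 prime_gt0.
  case: (leqP k L) => hk /=.
    move: q0; set q := p ^ k => q0.
    rewrite addn1 -ltnS ltn_divLR //.
    have e := divn_eq M q; have r := ltn_pmod M q0.
    move: e r; set a := M %/ q; set b := M %% q => e r.
    clear -e r; nia.
  have h : 2 * M < p ^ k.
    apply: leq_trans (trunc_log_ltn _ p1) _.
    by rewrite leq_exp2l.
  by rewrite divn_small.
rewrite big_split /= -big_distrr /= in key.
have := sum_le_ind (2 * M).+1 L.
lia.
Qed.

Lemma prod_le_const (s : seq nat) (F : nat -> nat) B :
  (forall x, x \in s -> F x <= B) -> \prod_(x <- s) F x <= B ^ size s.
Proof.
elim: s => [|x s IH] H; first by rewrite big_nil.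
rewrite big_cons /= expnS; apply: leq_mul.
  by apply: H; rewrite inE eqxx.
by apply: IH => y ys; apply: H; rewrite inE ys orbT.
Qed.

Lemma nth_prime_bound N M : 0 < M -> (2 * M) ^ N < 2 ^ M -> nth_prime N <= 2 * M.
Proof.
move=> M0 hlt; rewrite leqNgt; apply/negP => hN.
set C := 'C(2 * M, M).
have C0 : 0 < C by rewrite bin_gt0; lia.
have hC := prod_prime_decomp C0.
rewrite prime_decompE big_map /= in hC.
have pb : forall p, p \in primes C -> p ^ logn p C <= 2 * M.
  by move=> p; rewrite mem_primes => /andP [pp _]; apply: legendre_bound.
have h1 : C <= (2 * M) ^ size (primes C).
  by rewrite {1}hC; apply: prod_le_const.
have h2 : size (primes C) <= N.
  suff : size (primes C) <= size [seq nth_prime i | i <- iota 0 N].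
    by rewrite size_map size_iota.
  apply: uniq_leq_size; first exact: primes_uniq.
  move=> p pin.
  have pp : prime p by move: pin; rewrite mem_primes => /andP [].
  have lp : 0 < logn p C by rewrite logn_gt0.
  have : p <= 2 * M.
    apply: leq_trans _ (pb p pin).
    by rewrite -[X in X <= _]expn1 (leq_pexp2l (prime_gt0 pp)).
  move=> hp.
  have [j jN ->] := nth_prime_all pp (leq_ltn_trans hp hN).
  by apply: map_f; rewrite mem_iota.
have h3 : (2 * M) ^ size (primes C) <= (2 * M) ^ N by rewrite leq_pexp2l //; lia.
have := cbin_ge M; rewrite -/C; lia.
Qed.
Lemma card_gt0T (T : finType) (x : T) : 0 < #|T|.
Proof. by apply/card_gt0P; exists x. Qed.

Lemma Pr_le (T : finType) (E F : T -> Prop) :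
  (forall w, E w -> F w) -> Rle (Pr E) (Pr F).
Proof.
move=> h; rewrite /Pr /Rdiv.
case: (posnP #|T|) => T0.
  by rewrite T0 /= Rinv_0 !Rmult_0_r; apply: Rle_refl.
apply: Rmult_le_compat_r; first by apply/Rlt_le/Rinv_0_lt_compat/lt_0_INR/ltP.
apply/le_INR/leP/subset_leq_card/subsetP => w; rewrite !inE.
by move/pdecP/h/pdecP.
Qed.

Lemma Pr_true (T : finType) (E : T -> Prop) (x : T) :
  (forall w, E w) -> Pr E = R1.
Proof.
move=> h; rewrite (@Pr_card _ _ predT); last by move=> w; split.
have -> : #|[set w : T | predT w]| = #|T| by apply: eq_card => w; rewrite inE.
apply: Rinv_r; apply: not_0_INR; have := card_gt0T x; lia.
Qed.

Section RealSec.
Local Open Scope R_scope.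
Lemma exp2_le_exp K : INR (expn 2 K) <= exp (INR K).
Proof.
elim: K => [|K IH]; first by rewrite exp_0 /=; apply: Rle_refl.
rewrite expnS mult_INR (S_INR K) exp_plus.
have e1 : 2 <= exp 1 by have := exp_ineq1_le 1; lra.
have h0 : 0 <= INR (expn 2 K) by apply: pos_INR.
rewrite (_ : INR 2 = 2); last by rewrite /= ; lra.
rewrite Rmult_comm; apply: Rmult_le_compat => //; lra.
Qed.
End RealSec.

Lemma ineqA t : 16 <= t -> (2 * t + 1) * t < 2 ^ t.
Proof.
elim: t => [//|t IH] ht.
case: (leqP 16 t) => h.
  have := IH h; rewrite expnS; nia.
have -> : t = 15 by lia.
rewrite !expnS expn0; lia.
Qed.

Lemma ineqB t : 16 <= t -> (2 * t + 1) * t * 2 ^ t <= 3 ^ t.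
Proof.
elim: t => [//|t IH] ht.
case: (leqP 16 t) => h.
  have := IH h; rewrite !expnS; move: (2 ^ t) (3 ^ t) => X Y hXY.
  have : 2 * ((2 * t.+1 + 1) * t.+1) <= 3 * ((2 * t + 1) * t) by nia.
  nia.
have -> : t = 15 by lia.
rewrite !expnS expn0; lia.
Qed.

Lemma part2 : exists n0 : nat, forall n m : nat, 1 <= n -> n0 <= n -> n <= m ->
     Pr (fun w : Omega n m => forall i j,
           Rle (INR (Aent w i j)) (exp (INR (3 ^ (n * m))))) = R1.
Proof.
exists 4 => n m n1 n4 nm.
apply: (@Pr_true _ _ [ffun => set0]) => w i j.
set t := n * m.
have t16 : 16 <= t by rewrite /t; nia.
have nt : n <= t by rewrite /t; nia.
set N := bigN n m.
have eN : N = 2 ^ t * n by [].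
set M := 2 ^ (2 * t).
have M0 : 0 < M by rewrite expn_gt0.
have e2M : 2 * M = 2 ^ (2 * t + 1) by rewrite /M addn1 expnS mulnC.
have hA := ineqA t16.
have hB := ineqB t16.
have c1 : (2 * t + 1) * N < M.
  have e : 2 ^ (2 * t) = 2 ^ t * 2 ^ t by rewrite mul2n -addnn expnD.
  have h : (2 * t + 1) * n < 2 ^ t.
    by apply: leq_ltn_trans hA; rewrite leq_mul2l nt orbT.
  rewrite eN /M e mulnCA ltn_pmul2l ?expn_gt0 //.
have hNP : nth_prime N <= 2 * M.
  apply: nth_prime_bound => //.
  by rewrite e2M -expnM ltn_exp2l.
have hent : Aent w i j <= 2 ^ ((2 * t + 1) * N).
  rewrite expnM -e2M /Aent.
  apply: (@leq_trans (\prod_(k in w (i, j)) (2 * M))).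
    apply: leq_prod => k _; apply: leq_trans hNP.
    exact/ltnW/nth_prime_lt.
  rewrite prod_nat_const leq_pexp2l ?muln_gt0 ?M0 //.
  by apply: leq_trans (max_card _) _; rewrite card_ord.
have hexp : (2 * t + 1) * N <= 3 ^ t.
  rewrite eN; apply: leq_trans hB; move: (2 ^ t) => X.
  clear -nt; nia.
apply: Rle_trans (exp2_le_exp _).
apply/le_INR/leP; apply: leq_trans hent _.
by rewrite leq_exp2l.
Qed.

Lemma core N (U : {set 'I_N}) (k0 : 'I_N) p r :
  prime p -> (p = nth_prime k0 \/ (k0 = 0 :> nat /\ forall k : 'I_N, nth_prime k != p)) ->
  k0 \notin U ->
  \prod_(k in U) nth_prime k = r %[mod p] ->
  nth_prime k0 * \prod_(k in U) nth_prime k = r %[mod p] -> False.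
Proof.
move=> pp hk0 k0U; set x := \prod_(k in U) nth_prime k => h1 h2.
have pdx : p %| x.
  case: hk0 => [ep | [e0 _]].
    rewrite /dvdn; apply/eqP; rewrite h1 -h2 -ep; exact: modnMr.
  have e2 : nth_prime k0 = 2 by rewrite e0.
  rewrite e2 in h2.
  have : (2 * x == x %[mod p]) by rewrite h1 h2.
  by rewrite eqn_mod_dvd ?leq_pmull // (_ : 2 * x - x = x) //; lia.
case: (boolP [exists k in U, p %| nth_prime k]) => [/existsP [k /andP [kU pk]] | hno].
  rewrite dvdn_prime2 ?nth_prime_pr // in pk.
  case: hk0 => [ep | [_ hne]].
    rewrite ep in pk; move/eqP/nth_prime_inj/val_inj: pk => ek.
    by rewrite ek kU in k0U.
  by have := hne k; rewrite eq_sym pk.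
move: pdx; rewrite /x Euclid_dvd_prod // big1 // => k kU.
apply/negbTE; apply: contra hno => h; apply/existsP; exists k; by rewrite kU h.
Qed.

Lemma half_bound N p r : 0 < N -> prime p ->
  2 * #|[pred S : {set 'I_N} | \prod_(k in S) nth_prime k == r %[mod p]]| <= #|{set 'I_N}|.
Proof.
move=> N0 pp.
have [k0 hk0] : exists k0 : 'I_N,
    p = nth_prime k0 \/ (k0 = 0 :> nat /\ forall k : 'I_N, nth_prime k != p).
  case: (pickP (fun k : 'I_N => nth_prime k == p)) => [k /eqP hk | hno].
    by exists k; left.
  by exists (Ordinal N0); right; split => // k; rewrite hno.
pose tog (S : {set 'I_N}) := if k0 \in S then S :\ k0 else k0 |: S.
have togK : cancel tog tog.
  move=> S; rewrite /tog; case h: (k0 \in S).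
    by rewrite setD11 setD1K.
  by rewrite setU11 setU1K // h.
set C := [set S : {set 'I_N} | \prod_(k in S) nth_prime k == r %[mod p]].
have eC : #|[pred S : {set 'I_N} | \prod_(k in S) nth_prime k == r %[mod p]]| = #|C|.
  by apply: eq_card => S; rewrite /C inE.
rewrite eC.
have sub : tog @: C \subset ~: C.
  apply/subsetP => T /imsetP [S SC ->]; rewrite inE; apply/negP => TC.
  move: SC TC; rewrite !inE /tog.
  case: (boolP (k0 \in S)) => kS h1 h2.
    rewrite (big_setD1 k0 kS) /= in h1.
    apply: (@core N (S :\ k0) k0 p r pp hk0); first by rewrite setD11.
      exact/eqP.
    exact/eqP.
  rewrite (big_setU1 _ kS) /= in h2.
  exact: (@core N S k0 p r pp hk0 kS (eqP h1) (eqP h2)).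
have := subset_leq_card sub.
rewrite card_imset; last exact: can_inj togK.
have := cardsC C; move=> e1 e2; rewrite (_ : #|{set 'I_N}| = #|C| + #|~: C|) ?e1 //; lia.
Qed.

Lemma part1 n m : 1 <= n -> n <= m -> mx_balanced (@Aent n m) (Rinv 2).
Proof.
move=> n1 nm.
have r0 : 0 < #|{set 'I_(bigN n m)}| by apply: (card_gt0T set0).
split.
  move=> f.
  rewrite (@pr_family _ _ (fun x => [pred S : {set 'I_(bigN n m)} |
              \prod_(k in S) nth_prime k == f x.1 x.2])) //; last first.
    move=> w; split => [h [i j] | h i j]; first by rewrite inE /= -(h i j).
    by have := h (i, j); rewrite inE /= => /eqP.
  apply: eq_bigr => x _.
  rewrite (@pr_marg _ _ x [pred S : {set 'I_(bigN n m)} |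
              \prod_(k in S) nth_prime k == f x.1 x.2]) //.
  move=> w; rewrite inE /= /Aent -surjective_pairing.
  by split => [h|/eqP //]; rewrite h.
move=> i j p r pp.
rewrite (@pr_marg _ _ (i, j) [pred S : {set 'I_(bigN n m)} |
              \prod_(k in S) nth_prime k == r %[mod p]]) //; last first.
  move=> w; rewrite inE /= /Aent.
  by split => [h|/eqP //]; rewrite h.
have N0 : 0 < bigN n m by rewrite /bigN muln_gt0 expn_gt0.
have hb := half_bound r N0 pp.
move: r0 hb.
set a := #|[pred S : {set 'I_(bigN n m)} | _]|.
set T := #|{set 'I_(bigN n m)}|.
move=> r0 hb.
have hT : Rlt 0 (INR T) by apply/lt_0_INR/ltP.
have hb' : Rle (Rmult 2 (INR a)) (INR T).
  have := le_INR _ _ (leP hb); rewrite mult_INR /=; lra.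
apply: (Rmult_le_reg_r (INR T)) => //.
rewrite /Rdiv Rmult_assoc Rinv_l; last lra.
lra.
Qed.

Lemma Pr_bij (T1 T2 : finType) (f : T1 -> T2) (g : T2 -> T1)
    (E1 : T1 -> Prop) (E2 : T2 -> Prop) :
  cancel f g -> cancel g f -> (forall w, E1 w <-> E2 (f w)) -> Pr E1 = Pr E2.
Proof.
move=> fK gK h; rewrite /Pr.
rewrite (@bij_eq_card _ _ f); last by exists g.
rewrite -(card_imset _ (can_inj fK)); congr (Rdiv (INR _) _).
apply: eq_card => v; rewrite [in RHS]inE; apply/imsetP/idP.
  by case=> w; rewrite inE => /pdecP /h hw ->; apply/pdecP.
move=> /pdecP hv; exists (g v); last by rewrite gK.
by rewrite inE; apply/pdecP/h; rewrite gK.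
Qed.

Lemma big_const_R (N : nat) (c : R) : \big[Rmult/R1]_(k < N) c = pow c N.
Proof.
rewrite big_const_ord; elim: N => [//|N IH] /=; by rewrite IH.
Qed.

Lemma pow_le_expN (y : R) (N : nat) : Rle 0 (1 - y) ->
  Rle (pow (1 - y) N) (exp (Ropp (Rmult y (INR N)))).
Proof.
move=> hy; elim: N => [|N IH]; first by rewrite /= Rmult_0_r Ropp_0 exp_0; apply: Rle_refl.
change (pow (1 - y) N.+1) with (Rmult (1 - y) (pow (1 - y) N)).
rewrite S_INR (_ : Ropp (Rmult y (INR N + 1)) = Rplus (Ropp y) (Ropp (Rmult y (INR N)))); last by ring.
rewrite exp_plus; apply: Rmult_le_compat => //.
- exact: pow_le.
- have := exp_ineq1_le (Ropp y); lra.
Qed.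

Lemma surj_E n m (i0 : 'I_n) (w : Omega n m) :
  int_surjective (Aent w) -> forall k, [exists j, k \notin w (i0, j)].
Proof.
move=> hs k; case: (boolP [exists j, k \notin w (i0, j)]) => // hne; exfalso.
move: hne; rewrite negb_exists => /forallP hall.
set p := nth_prime k.
have [x hx] := hs (fun i => if i == i0 then 1%Z else 0%Z).
have := hx i0; rewrite eqxx => hsum.
have pdiv : (Z.of_nat p | \big[Z.add/0%Z]_(j < m) (Z.of_nat (Aent w i0 j) * x j))%Z.
  apply: (big_ind (fun z => (Z.of_nat p | z)%Z)).
  - exact: Z.divide_0_r.
  - by move=> a b ha hb; apply: Z.divide_add_r.
  move=> j _; apply: Z.divide_mul_l.
  have kin : k \in w (i0, j) by have := hall j; rewrite negbK.
  rewrite /Aent (big_setD1 k kin) /= Nat2Z.inj_mul.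
  exact: Z.divide_mul_l (Z.divide_refl _).
rewrite hsum in pdiv.
have := Z.divide_pos_le _ _ Z.lt_0_1 pdiv.
have := prime_gt1 (nth_prime_pr k); rewrite -/p; lia.
Qed.

Lemma part3 n m : 1 <= n -> n <= m ->
  Rle (Pr (fun w : Omega n m => int_surjective (Aent w))) (exp (Ropp (INR n))).
Proof.
move=> n1 nm.
set i0 : 'I_n := Ordinal n1.
set N := bigN n m.
pose E1 (w : Omega n m) := forall k : 'I_N, [exists j, k \notin w (i0, j)].
apply: Rle_trans (Pr_le (F := E1) (surj_E i0)) _.
pose tr (w : Omega n m) : {ffun 'I_N -> {ffun 'I_n * 'I_m -> bool}} :=
  [ffun k => [ffun x => k \in w x]].
pose untr (g : {ffun 'I_N -> {ffun 'I_n * 'I_m -> bool}}) : Omega n m :=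
  [ffun x => [set k | g k x]].
have trK : cancel tr untr.
  by move=> w; apply/ffunP => x; rewrite ffunE; apply/setP => k; rewrite inE !ffunE.
have untrK : cancel untr tr.
  by move=> g; apply/ffunP => k; apply/ffunP => x; rewrite !ffunE inE.
set B := [pred h : {ffun 'I_n * 'I_m -> bool} | [exists j, ~~ h (i0, j)]].
rewrite (@Pr_bij _ _ tr untr E1 (fun g => forall k, g k \in B)) //; last first.
  move=> w; rewrite /E1; split => H k; have := H k; rewrite inE /=.
    by move=> /existsP [j hj]; apply/existsP; exists j; rewrite !ffunE.
  by move=> /existsP [j hj]; apply/existsP; exists j; move: hj; rewrite !ffunE.
rewrite (@pr_family _ _ (fun _ => B)); last by move=> g; split.
  2: by apply: (card_gt0T [ffun => true]).
rewrite big_const_R.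
set F := fun x : 'I_n * 'I_m => if x.1 == i0 then pred1 true else predT.
have eB : #|B| + #|family F| = 2 ^ (n * m).
  have -> : 2 ^ (n * m) = #|{ffun 'I_n * 'I_m -> bool}|.
    by rewrite card_ffun card_bool card_prod !card_ord.
  rewrite -(cardC (family F)) addnC; congr (_ + _); apply: eq_card => h.
  rewrite !inE /=; apply/idP/idP.
    move=> /existsP [j hj]; apply/negP => /familyP /(_ (i0, j)).
    by rewrite /F /= inE /= (negbTE hj).
  move=> hn; case: (boolP [exists j, ~~ h (i0, j)]) => // hno; exfalso.
  apply: (negP hn); apply/forallP => x.
  rewrite /F; case: eqP => [e|_] //; rewrite inE /=.
  have := hno; rewrite negb_exists => /forallP /(_ x.2); rewrite negbK.
  by rewrite -e -surjective_pairing => ->.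
have eF : #|family F| * 2 ^ m = 2 ^ (n * m).
  rewrite card_family foldr_prodT.
  rewrite (eq_bigr (fun x => if x.1 != i0 then 2 else 1)); last first.
    move=> x _; rewrite /F; case: eqP => _ /=; first by rewrite card1.
    by rewrite card_bool.
  rewrite -big_mkcond /= prod_nat_const.
  set A := (fun i : 'I_n * 'I_m => i.1 != i0).
  have cm : #|[predC A]| = m.
    transitivity #|[predX (pred1 i0) & (predT : pred 'I_m)]|.
      by apply: eq_card => x; rewrite !inE /A negbK andbT.
    by rewrite cardX card1 mul1n (eq_card (B := 'I_m)) ?card_ord.
  rewrite -[X in _ * 2 ^ X = _]cm.
  by rewrite -expnD cardC card_prod !card_ord.
set T := #|{ffun 'I_n * 'I_m -> bool}|.
have eT : T = 2 ^ (n * m) by rewrite /T card_ffun card_bool card_prod !card_ord.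
rewrite -eT in eB eF.
move: eB eF; set b := #|B|; set c := #|family F| => eB eF.
have eN : N = 2 ^ (n * m) * n by [].
have hNn : 2 ^ m * n <= N.
  have mm : m <= n * m by nia.
  by rewrite eN leq_mul2r leq_exp2l // mm orbT.
have R1' : Rplus (INR b) (INR c) = INR T by rewrite -plus_INR; apply: f_equal; exact: eB.
have R2' : Rmult (INR c) (INR (2 ^ m)) = INR T by rewrite -mult_INR; apply: f_equal; exact: eF.
have R3 : Rle (Rmult (INR (2 ^ m)) (INR n)) (INR N).
  by rewrite -mult_INR; apply/le_INR/leP.
have X1 : Rle 1 (INR (2 ^ m)).
  by apply: (le_INR 1); apply/leP; rewrite expn_gt0.
have hT0 : Rlt 0 (INR T) by apply/lt_0_INR/ltP; rewrite eT expn_gt0.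
move: R1' R2' R3 X1 hT0.
set Bb := INR b; set C := INR c; set TT := INR T; set X := INR (2 ^ m).
set Nn := INR N; set nn := INR n => R1' R2' R3 X1 hT0.
have eq1 : Rdiv Bb TT = Rminus 1 (Rinv X).
  have TT0 : TT <> R0 by lra.
  have X0 : X <> R0 by lra.
  have -> : Bb = Rminus TT C by lra.
  have -> : C = Rdiv TT X by rewrite -R2'; field.
  by field.
rewrite eq1.
have Xi : Rle (Rinv X) 1.
  rewrite -Rinv_1; apply: Rinv_le_contravar; lra.
apply: Rle_trans (pow_le_expN _ _) _; first lra.
have nn0 : Rle 0 nn by apply: pos_INR.
have : Rle nn (Rmult (Rinv X) Nn).
  apply: (Rmult_le_reg_l X); first lra.
  rewrite -Rmult_assoc Rinv_r; lra.
move=> h; case: (Rle_lt_or_eq_dec _ _ h) => h'.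
  rewrite -/Nn;   apply/Rlt_le/exp_increasing; lra.
by rewrite -/Nn h'; apply: Rle_refl.
Qed.

Theorem mainTheorem5 :
  (forall n m : nat, 1 <= n -> n <= m ->
     mx_balanced (@Aent n m) (Rinv 2)) /\
  (exists n0 : nat, forall n m : nat, 1 <= n -> n0 <= n -> n <= m ->
     Pr (fun w : Omega n m => forall i j,
           Rle (INR (Aent w i j)) (exp (INR (3 ^ (n * m))))) = R1) /\
  (forall n m : nat, 1 <= n -> n <= m ->
     Rle (Pr (fun w : Omega n m => int_surjective (Aent w))) (exp (Ropp (INR n)))).
Proof.
split; first exact: part1.
split; first exact: part2.
exact: part3.
Qed.
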